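(* Let $R\subseteq\mathbb{Q}_{>0}\setminus\{1\}$ be non-empty. If $\omega(G(R))=\infty$ (i.e. $G(R)$ contains cliques of every finite size), then $R$ is a set of (measurable) multiplicative recurrence.
   Context: $G(R)$ is the graph with vertex set $\mathbb{N}=\{1,2,\dots\}$ and edge set $\{\{m,n\}: m/n\in R\}$; $\omega$ denotes the clique number. A set $R\subseteq \mathbb{Q}_{>0}\setminus\{1\}$ is a set of (measurable) multiplicative recurrence if for every measure-preserving action $T=(T_n)_{n\in\mathbb{N}}$ of the semigroup $(\mathbb{N},\times)$ on a probability space $(X,\mathcal{B},\mu)$ (each $T_n$ measure-preserving, $T_{mn}=T_m\circ T_n$) and every $B\in\mathcal{B}$ with $\mu(B)>0$, there exist $m,n\in\mathbb{N}$ with $m/n\in R$ and $\mu(T_m^{-1}B\cap T_n^{-1}B)>0$. *)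

(* Defs.v *)
From HB Require Import structures.
From mathcomp Require Import all_boot all_order all_algebra.
From mathcomp Require Import all_classical all_reals all_analysis.
Set Implicit Arguments. Unset Strict Implicit. Unset Printing Implicit Defensive.
Import Order.TTheory GRing.Theory Num.Theory.
Local Open Scope classical_set_scope.
Local Open Scope ring_scope.

Definition adjG (S : set rat) (m n : nat) : Prop :=
  m <> n /\ (S (m%:Q / n%:Q) \/ S (n%:Q / m%:Q)).

Definition has_clique (S : set rat) (k : nat) : Prop :=
  exists s : seq nat, [/\ size s = k, uniq s, all (fun n => 0 < n)%N s &
    forall m n, m \in s -> n \in s -> m <> n -> adjG S m n].

Definition clique_number_infinite (S : set rat) : Prop :=
  forall k : nat, has_clique S k.

(* A measure-preserving action of the semigroup (N_{>0}, x) on a probability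
   space (X, P): maps T n (n >= 1) that are measurable, measure preserving and
   satisfy T (m n) = T m \o T n.  (Values of T at 0 are irrelevant.) *)
Definition mp_mult_action (Rr : realType) (d : measure_display)
    (X : measurableType d) (P : probability X Rr) (T : nat -> X -> X) : Prop :=
  [/\ (forall n, (0 < n)%N -> measurable_fun setT (T n)),
      (forall n A, (0 < n)%N -> measurable A -> P (T n @^-1` A) = P A) &
      (forall m n, (0 < m)%N -> (0 < n)%N -> T (m * n)%N = T m \o T n)].

Definition mult_recurrence (Rr : realType) (S : set rat) : Prop :=
  forall (d : measure_display) (X : measurableType d) (P : probability X Rr)
         (T : nat -> X -> X),
    mp_mult_action P T ->
    forall B : set X, measurable B -> (0 < P B)%E ->
      exists m n : nat, [/\ (0 < m)%N, (0 < n)%N, S (m%:Q / n%:Q) &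
        (0 < P (T m @^-1` B `&` T n @^-1` B))%E].

(* Main.v *)
Require Import Defs.
From HB Require Import structures.
From mathcomp Require Import all_boot all_order all_algebra.
From mathcomp Require Import all_classical all_reals all_analysis.
Local Open Scope classical_set_scope.
Local Open Scope ring_scope.
Import Order.TTheory GRing.Theory Num.Theory.

Section Aux.
Variables (Rr : realType) (d : measure_display) (X : measurableType d)
  (P : probability X Rr) (A : nat -> set X).
Hypothesis mA : forall n, measurable (A n).

Definition Us (s : seq nat) := \big[setU/set0]_(n <- s) A n.

Lemma Us_meas s : measurable (Us s).
Proof.
elim: s => [|x s IH]; rewrite /Us ?big_nil ?big_cons //.
exact: measurableU.
Qed.

Lemma Us_null C s : measurable C ->
  (forall n, n \in s -> P (C `&` A n) = 0%E) -> P (C `&` Us s) = 0%E.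
Proof.
move=> mC; elim: s => [|x s IH] H; rewrite /Us ?big_nil ?big_cons.
  by rewrite setI0 measure0.
rewrite setIUr null_set_setU //.
- exact: measurableI.
- exact: measurableI (Us_meas s).
- by apply: H; rewrite mem_head.
- by apply: IH => n ns; apply: H; rewrite in_cons ns orbT.
Qed.

Lemma Us_sum (b : Rr) s : uniq s ->
  (forall n, n \in s -> P (A n) = b%:E) ->
  (forall m n, m \in s -> n \in s -> m <> n -> P (A m `&` A n) = 0%E) ->
  P (Us s) = (b *+ size s)%:E.
Proof.
elim: s => [|x s IH] /=; first by rewrite /Us big_nil measure0.
move=> /andP[xs us] Hb H0; rewrite /Us big_cons -/(Us s).
rewrite measureUfinl //; last 2 first.
- exact: Us_meas.
- by apply: le_lt_trans (probability_le1 P (mA x)) _; rewrite ltry.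
change ((P (A x) + P (Us s) - P (A x `&` Us s))%E = (b *+ (size s).+1)%:E).
have -> : P (A x `&` Us s) = 0%E.
  apply: Us_null => // n ns; apply: H0; rewrite ?mem_head ?in_cons ?ns ?orbT //.
  by move=> E; subst n; rewrite ns in xs.
have -> : P (A x) = b%:E by apply: Hb; rewrite mem_head.
have -> : P (Us s) = (b *+ size s)%:E.
  apply: IH => //.
  - by move=> n ns; apply: Hb; rewrite in_cons ns orbT.
  - by move=> m n ms ns; apply: H0; rewrite in_cons ?ms ?ns orbT.
by rewrite sube0 -EFinD mulrS.
Qed.

End Aux.

Theorem lemma3p1 (Rr : realType) (S : set rat) :
  (forall q, S q -> 0 < q /\ q != 1) ->
  S !=set0 ->
  clique_number_infinite S ->
  mult_recurrence Rr S.
Proof.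
move=> _ _ Hcl d X P T [mT pT _] B mB PB0.
set A := fun n => T n @^-1` B.
have mA : forall n, (0 < n)%N -> measurable (A n).
  by move=> n n0; have := mT n n0 measurableT B mB; rewrite setTI.
have finB : P B \is a fin_num by apply: fin_num_measure.
set b := fine (P B).
have PBb : P B = b%:E by rewrite fineK.
have b0 : 0 < b by rewrite -lte_fin -PBb.
set k := (Num.truncn (b^-1)).+1.
have kb : 1 < b *+ k.
  have := truncnS_gt (b^-1); rewrite -/k => h.
  by rewrite -mulr_natr -(ltr_pdivrMl _ _ b0) mulr1.
have [s [sz us pos cl]] := Hcl k.
have spos : forall n, n \in s -> (0 < n)%N by move=> n ns; exact: (allP pos n ns).
apply: contrapT => Hno.
pose A' := fun n => if (0 < n)%N then A n else set0.
have mA' : forall n, measurable (A' n).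
  by move=> n; rewrite /A'; case: ifP => // /mA.
have H0 : forall m n, m \in s -> n \in s -> m <> n -> P (A' m `&` A' n) = 0%E.
  move=> m n ms ns mn; rewrite /A' (spos m ms) (spos n ns).
  apply/eqP; rewrite -measure_le0 leNgt; apply/negP => hpos.
  apply: Hno; have [_ [Hs|Hs]] := cl m n ms ns mn.
  - by exists m, n; split => //; [exact: spos|exact: spos].
  - by exists n, m; split => //; [exact: spos|exact: spos|rewrite setIC].
have HU := @Us_sum Rr d X P A' mA' b s us.
have HU' : P (Us d X A' s) = (b *+ size s)%:E.
  apply: HU => //  n ns; rewrite /A' (spos n ns) /A pT //; exact: spos.
have := probability_le1 P (@Us_meas d X A' mA' s).
rewrite HU' sz lee_fin => h.
by move: (lt_le_trans kb h); rewrite ltxx.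
Qed.
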